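(* Let $G_1,G_2$ be cubic graphs, let $c_1\sim c_2$ be proper $3$-edge colorings of $G_1$ and $d_1\sim d_2$ proper $3$-edge colorings of $G_2$. Then $(c_1\,Y\,d_1)\sim(c_2\,Y\,d_2)$ in $G_1\,Y\,G_2$ and $(c_1\,H\,d_1)\sim(c_2\,H\,d_2)$ in $G_1\,H\,G_2$.
   Context: Graphs are finite; multiple edges allowed, loops not. Proper $3$-edge colorings use colors $\{1,2,3\}$, adjacent edges receiving different colors. For colors $a\neq b$, an edge-Kempe chain is a connected component of the subgraph of edges colored $a$ or $b$; an edge-Kempe switch swaps $a,b$ on one chain; $\sim$ denotes equivalence under finite sequences of such switches. Composition Y: choose $v_1\in G_1$ with incident edges $x_j=v_1s_{1j}$ and $v_2\in G_2$ with incident edges $y_j=v_2s_{2j}$ ($j=1,2,3$); $G_1\,Y\,G_2$ deletes $v_1,v_2$ and adds edges $s_{1j}s_{2j}$. Composition H: choose edges $x=s_{11}s_{12}\in G_1$, $y=s_{21}s_{22}\in G_2$; $G_1\,H\,G_2$ deletes $x,y$ and adds $s_{11}s_{21},s_{12}s_{22}$. For proper $3$-edge colorings $c$ of $G_1$, $d$ of $G_2$: let $\hat d$ be obtained from $d$ by a global color permutation with $\hat d(y_j)=c(x_j)$; $c\,Y\,d$ colors $G_1-v_1$ by $c$, $G_2-v_2$ by $\hat d$, and $s_{1j}s_{2j}$ by $c(x_j)$. Let $\tilde d$ be obtained from $d$ by a global color permutation with $\tilde d(y)=c(x)$; $c\,H\,d$ colors $G_1-x$ by $c$, $G_2-y$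 by $\tilde d$, and both new edges by $c(x)$. *)

(* Defs.v *)
From HB Require Import structures.
From mathcomp Require Import all_boot perm.
From Stdlib Require Import Relations.

Set Implicit Arguments.
Unset Strict Implicit.
Unset Printing Implicit Defensive.

Record mgraph := MGraph {
  vert : finType;
  edge : finType;
  src : edge -> vert;
  tgt : edge -> vert }.

Arguments src {m} _.
Arguments tgt {m} _.

Definition loopless (G : mgraph) : Prop := forall e : edge G, src e != tgt e.

Definition incident (G : mgraph) (v : vert G) (e : edge G) : bool :=
  (src e == v) || (tgt e == v).

Definition cubic (G : mgraph) : Prop :=
  forall v : vert G, #|[set e | incident v e]| = 3.

Definition share_end (G : mgraph) (e f : edge G) : bool :=
  [|| src e == src f, src e == tgt f, tgt e == src f | tgt e == tgt f].

Definition adjacent (G : mgraph) (e f : edge G) : bool :=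
  (e != f) && share_end e f.

(* edge colorings with colours {1,2,3}, represented by 'I_3 *)
Definition coloring (G : mgraph) := {ffun edge G -> 'I_3}.

Definition proper3 (G : mgraph) (c : coloring G) : Prop :=
  forall e f : edge G, adjacent e f -> c e != c f.

Definition kadj (G : mgraph) (c : coloring G) (a b : 'I_3) : rel (edge G) :=
  fun e f => [&& c e \in [:: a; b], c f \in [:: a; b] & share_end e f].

Definition swapc (a b k : 'I_3) : 'I_3 :=
  if k == a then b else if k == b then a else k.

Definition kempe_switch (G : mgraph) (c : coloring G) (a b : 'I_3) (e0 : edge G)
  : coloring G :=
  [ffun e => if connect (kadj c a b) e0 e then swapc a b (c e) else c e].

Definition kempe_step (G : mgraph) (c c' : coloring G) : Prop :=
  exists (a b : 'I_3) (e0 : edge G),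
    [/\ a != b, c e0 \in [:: a; b] & c' = kempe_switch c a b e0].

Definition kempe_equiv (G : mgraph) : relation (coloring G) :=
  clos_refl_trans (coloring G) (@kempe_step G).

Lemma ninc_src (G : mgraph) (v : vert G) (e : edge G) :
  ~~ incident v e -> src e != v.
Proof. by rewrite /incident negb_or => /andP[]. Qed.

Lemma ninc_tgt (G : mgraph) (v : vert G) (e : edge G) :
  ~~ incident v e -> tgt e != v.
Proof. by rewrite /incident negb_or => /andP[]. Qed.

Section Ycomp.
Variables (G1 G2 : mgraph) (v1 : vert G1) (v2 : vert G2).
(* s1 j, s2 j : the far ends of the edges x_j, y_j *)
Variables (s1 : 'I_3 -> {u : vert G1 | u != v1}) (s2 : 'I_3 -> {u : vert G2 | u != v2}).

Definition Yvert : finType := ({u : vert G1 | u != v1} + {u : vert G2 | u != v2})%type.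
Definition Yedge : finType :=
  ({e : edge G1 | ~~ incident v1 e} + {e : edge G2 | ~~ incident v2 e} + 'I_3)%type.

Definition Ysrc (e : Yedge) : Yvert :=
  match e with
  | inl (inl e1) => inl (exist _ (src (val e1)) (ninc_src (valP e1)))
  | inl (inr e2) => inr (exist _ (src (val e2)) (ninc_src (valP e2)))
  | inr j => inl (s1 j)
  end.

Definition Ytgt (e : Yedge) : Yvert :=
  match e with
  | inl (inl e1) => inl (exist _ (tgt (val e1)) (ninc_tgt (valP e1)))
  | inl (inr e2) => inr (exist _ (tgt (val e2)) (ninc_tgt (valP e2)))
  | inr j => inr (s2 j)
  end.

Definition Ycomp : mgraph := @MGraph Yvert Yedge Ysrc Ytgt.

(* c Y d, where sigma is the global colour permutation turning d into d-hat,
   and x j are the edges of G1 at v1 *)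
Definition Ycol (x : 'I_3 -> edge G1) (c : coloring G1) (d : coloring G2)
  (sigma : {perm 'I_3}) : coloring Ycomp :=
  [ffun e : Yedge => match e with
    | inl (inl e1) => c (val e1)
    | inl (inr e2) => sigma (d (val e2))
    | inr j => c (x j)
    end].
End Ycomp.

Section Hcomp.
Variables (G1 G2 : mgraph) (x : edge G1) (y : edge G2).
Variables (s11 s12 : vert G1) (s21 s22 : vert G2).

Definition Hvert : finType := (vert G1 + vert G2)%type.
Definition Hedge : finType :=
  ({e : edge G1 | e != x} + {e : edge G2 | e != y} + bool)%type.

Definition Hsrc (e : Hedge) : Hvert :=
  match e with
  | inl (inl e1) => inl (src (val e1))
  | inl (inr e2) => inr (src (val e2))
  | inr false => inl s11
  | inr true => inl s12
  end.

Definition Htgt (e : Hedge) : Hvert :=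
  match e with
  | inl (inl e1) => inl (tgt (val e1))
  | inl (inr e2) => inr (tgt (val e2))
  | inr false => inr s21
  | inr true => inr s22
  end.

Definition Hcomp : mgraph := @MGraph Hvert Hedge Hsrc Htgt.

(* c H d, with tau the global colour permutation turning d into d-tilde *)
Definition Hcol (c : coloring G1) (d : coloring G2) (tau : {perm 'I_3})
  : coloring Hcomp :=
  [ffun e : Hedge => match e with
    | inl (inl e1) => c (val e1)
    | inl (inr e2) => tau (d (val e2))
    | inr _ => c x
    end].
End Hcomp.

(* Main.v *)
Require Import Defs.
From HB Require Import structures.
From mathcomp Require Import all_boot perm.
From Stdlib Require Import Relations.
Set Implicit Arguments. Unset Strict Implicit. Unset Printing Implicit Defensive.


Lemma share_endC (G : mgraph) (e f : edge G) : share_end e f = share_end f e.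
Proof.
rewrite /share_end (eq_sym (src f)) (eq_sym (tgt f)) (eq_sym (src f) (tgt e)) (eq_sym (tgt f) (tgt e)).
by case: (src e == src f); case: (src e == tgt f); case: (tgt e == src f); case: (tgt e == tgt f).
Qed.

Lemma kadjC (G : mgraph) (c : coloring G) a b : ssrbool.symmetric (kadj c a b).
Proof. by move=> e f; rewrite /kadj share_endC andbCA. Qed.

Ltac ord3 := let x := fresh in move=> x; case: x => [[|[|[|//]]] ?].

Lemma swapc_in a b k : (swapc a b k \in [:: a; b]) = (k \in [:: a; b]).
Proof. by move: a b k; ord3; ord3; ord3. Qed.

Lemma swapcK a b : involutive (swapc a b).
Proof. by move: a b; ord3; ord3; ord3; apply/val_inj. Qed.

Lemma swapc_out a b k : k \notin [:: a; b] -> swapc a b k = k.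
Proof. by rewrite /swapc !inE negb_or => /andP[/negbTE-> /negbTE->]. Qed.

Lemma swapc_perm (s : {perm 'I_3}) a b k : swapc (s a) (s b) (s k) = s (swapc a b k).
Proof.
rewrite /swapc (inj_eq perm_inj) (inj_eq perm_inj).
by case: (k == a) => //; case: (k == b).
Qed.

Lemma perm_in (s : {perm 'I_3}) a b k : (s k \in [:: s a; s b]) = (k \in [:: a; b]).
Proof. by rewrite !inE !(inj_eq perm_inj). Qed.

Lemma connect_ab (G : mgraph) (c : coloring G) a b e0 e :
  connect (kadj c a b) e0 e -> c e0 \in [:: a; b] -> c e \in [:: a; b].
Proof.
case/connectP=> p pth ->; elim: p e0 pth => //= f p IH e0 /andP[k pth] _.
apply: IH pth _; by case/and3P: k.
Qed.

Lemma closed_conn (T : finType) (r : rel T) (S : {set T}) x y :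
  (forall e f, e \in S -> r e f -> f \in S) -> x \in S -> connect r x y -> y \in S.
Proof.
move=> Scl xS /connectP[p pth ->].
elim: p x xS pth => //= f p IHp g gS /andP[k pth].
exact: IHp (Scl _ _ gS k) pth.
Qed.

Definition swapS (G : mgraph) (c : coloring G) a b (S : {set edge G}) : coloring G :=
  [ffun e => if e \in S then swapc a b (c e) else c e].

Lemma switch_set (G : mgraph) (c : coloring G) (a b : 'I_3) (S : {set edge G}) :
  a != b -> (forall e, e \in S -> c e \in [:: a; b]) ->
  (forall e f, e \in S -> kadj c a b e f -> f \in S) ->
  kempe_equiv c (swapS c a b S).
Proof.
move=> ab; have [n Hn] : exists n, #|S| < n by exists #|S|.+1.
elim: n c S Hn => [//|n IH] c S Hn Sab Scl.
case: (set_0Vmem S) => [S0|[e0 e0S]].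
  have -> : swapS c a b S = c by apply/ffunP=> e; rewrite ffunE S0 inE.
  exact: rt_refl.
set c1 := kempe_switch c a b e0.
set C := [set e | connect (kadj c a b) e0 e].
have CS : forall e, e \in C -> e \in S.
  move=> e; rewrite inE; exact: closed_conn Scl e0S.
have kad : forall e f, kadj c1 a b e f = kadj c a b e f.
  by move=> e f; rewrite /kadj !ffunE; case: ifP; case: ifP; rewrite ?swapc_in.
apply: (rt_trans _ _ _ c1).
  apply: rt_step; exists a, b, e0; split => //; exact: Sab e0S.
have -> : swapS c a b S = swapS c1 a b (S :\: C).
  apply/ffunP=> e; rewrite !ffunE !inE.
  case: (boolP (connect _ e0 e)) => /= hC.
    by rewrite (CS e) ?inE // swapcK.
  by [].
apply: IH.
- have : #|S :\: C| <= #|S :\ e0|.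
    apply: subset_leq_card; apply/subsetP=> e; rewrite !inE => /andP[h ->].
    rewrite andbT; apply: contraNneq h => ->; exact: connect0.
  move: Hn; rewrite (cardsD1 e0 S) e0S add1n ltnS => h1 h2.
  exact: leq_ltn_trans h2 h1.
- move=> e; rewrite !inE => /andP[hC eS]; rewrite ffunE.
  rewrite (negbTE hC); have := Sab e eS; by rewrite !inE.
- move=> e f; rewrite !inE kad => /andP[hC eS] k.
  rewrite (Scl _ _ eS k) andbT; apply: contra hC => hf.
  apply: connect_trans hf (connect1 _); by rewrite kadjC.
Qed.

Lemma tpermS (a b k : 'I_3) : tperm a b k = swapc a b k.
Proof. by rewrite permE. Qed.

Lemma kempe_ind (G : mgraph) (P : coloring G -> coloring G -> Prop) :
  (forall c, P c c) -> (forall c1 c2 c3, P c1 c2 -> P c2 c3 -> P c1 c3) ->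
  (forall (c : coloring G) (a b : 'I_3) e0, a != b -> c e0 \in [:: a; b] -> P c (kempe_switch c a b e0)) ->
  forall c c', kempe_equiv c c' -> P c c'.
Proof.
move=> Pr Pt Ps c c'; elim=> //.
- by move=> ? ? [a [b [e0 [ab ce ->]]]]; apply: Ps.
- by move=> ? ? ? _ h1 _ h2; exact: Pt h1 h2.
Qed.

Lemma kadjE (G : mgraph) (c : coloring G) a b e f :
  kadj c a b e f = [&& c e \in [:: a; b], c f \in [:: a; b] & share_end e f].
Proof. by []. Qed.


Section YS.
Variables (G1 G2 : mgraph) (v1 : vert G1) (v2 : vert G2)
  (x : 'I_3 -> edge G1) (y : 'I_3 -> edge G2)
  (s1 : 'I_3 -> {u : vert G1 | u != v1}) (s2 : 'I_3 -> {u : vert G2 | u != v2}).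
Hypothesis hx : forall j, (src (x j) = v1 /\ tgt (x j) = val (s1 j)) \/
                (tgt (x j) = v1 /\ src (x j) = val (s1 j)).
Hypothesis hy : forall j, (src (y j) = v2 /\ tgt (y j) = val (s2 j)) \/
                (tgt (y j) = v2 /\ src (y j) = val (s2 j)).
Notation YG := (Ycomp s1 s2).

Lemma Ysh11 (e1 f1 : {e : edge G1 | ~~ incident v1 e}) :
  share_end (G:=YG) (inl (inl e1)) (inl (inl f1)) = share_end (val e1) (val f1).
Proof. by []. Qed.
Lemma Ysh22 (e1 f1 : {e : edge G2 | ~~ incident v2 e}) :
  share_end (G:=YG) (inl (inr e1)) (inl (inr f1)) = share_end (val e1) (val f1).
Proof. by []. Qed.
Lemma Ysh12 (e1 : {e : edge G1 | ~~ incident v1 e}) (f1 : {e : edge G2 | ~~ incident v2 e}) :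
  share_end (G:=YG) (inl (inl e1)) (inl (inr f1)) = false.
Proof. by []. Qed.
Lemma Ysh1 (e1 : {e : edge G1 | ~~ incident v1 e}) j :
  share_end (G:=YG) (inl (inl e1)) (inr j) -> share_end (val e1) (x j).
Proof.
rewrite /share_end /= orbF.
have E : forall u (pu : u != v1) w, (inl (exist (fun x0 => x0 != v1) u pu) == inl w :> Yvert v1 v2) = (u == val w) by [].
rewrite !E.
case: (hx j) => -[-> ->] /orP[] /eqP ->; by rewrite eqxx ?orbT.
Qed.
Lemma Ysh2 (e1 : {e : edge G2 | ~~ incident v2 e}) j :
  share_end (G:=YG) (inl (inr e1)) (inr j) -> share_end (val e1) (y j).
Proof.
rewrite /share_end /=.
have E : forall u (pu : u != v2) w, (inr (exist (fun x0 => x0 != v2) u pu) == inr w :> Yvert v1 v2) = (u == val w) by [].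
have F : forall u (pu : u != v2) w, (inr (exist (fun x0 => x0 != v2) u pu) == inl w :> Yvert v1 v2) = false by [].
rewrite /= !E.
case: (hy j) => -[-> ->] /orP[] /eqP ->; by rewrite eqxx ?orbT.
Qed.

Lemma sx j k : share_end (x j) (x k).
Proof. by rewrite /share_end; case: (hx j) => -[-> _]; case: (hx k) => -[-> _]; rewrite eqxx ?orbT. Qed.
Lemma sy j k : share_end (y j) (y k).
Proof. by rewrite /share_end; case: (hy j) => -[-> _]; case: (hy k) => -[-> _]; rewrite eqxx ?orbT. Qed.

Definition compat (c : coloring G1) (d : coloring G2) (s : {perm 'I_3}) :=
  forall j, s (d (y j)) = c (x j).

Lemma YB (c : coloring G1) (d : coloring G2) (s : {perm 'I_3}) a b e0 :
  a != b -> c e0 \in [:: a; b] -> compat c d s ->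
  exists s', compat (kempe_switch c a b e0) d s' /\
    kempe_equiv (Ycol s1 s2 x c d s) (Ycol s1 s2 x (kempe_switch c a b e0) d s').
Proof.
move=> ab ce0 cp.
set hit := [exists k, connect (kadj c a b) e0 (x k)].
have hitP : forall j, c (x j) \in [:: a; b] -> hit -> connect (kadj c a b) e0 (x j).
  move=> j cj /existsP; case=> k hk; apply: (connect_trans hk); apply: connect1.
  by rewrite kadjE cj (connect_ab hk ce0) sx.
set S := [set e : Yedge v1 v2 | match e with
   | inl (inl e1) => connect (kadj c a b) e0 (val e1)
   | inr j => connect (kadj c a b) e0 (x j)
   | inl (inr e2) => hit && (s (d (val e2)) \in [:: a; b]) end].
exists (if hit then s * tperm a b else s)%g; split.
  move=> j; rewrite ffunE.
  case hj: (connect (kadj c a b) e0 (x j)).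
    have hh : hit by apply/existsP; exists j.
    by rewrite hh permM tpermS cp.
  case hh: hit; last by rewrite cp.
  rewrite permM tpermS cp swapc_out //; apply: contraFN hj => h; exact: hitP.
have -> : Ycol s1 s2 x (kempe_switch c a b e0) d (if hit then s * tperm a b else s)%g
        = swapS (Ycol s1 s2 x c d s) a b S.
  apply/ffunP => -[[e1|e2]|j]; rewrite !ffunE inE //=.
  case: ifP => hh /=; last by [].
  by rewrite permM tpermS; case: ifP => // h; rewrite swapc_out ?h.
apply: switch_set => //.
  move=> -[[e1|e2]|j]; rewrite inE ffunE /=.
  - by move=> h; exact: connect_ab h ce0.
  - by case/andP.
  - by move=> h; exact: connect_ab h ce0.
move=> e f; rewrite inE kadjE !ffunE => eS /and3P[ce cf sh]; rewrite inE.
move: e f eS ce cf sh => [[e1|e2]|j] [[f1|f2]|k] //= eS ce cf sh.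
- apply: connect_trans eS (connect1 _); by rewrite kadjE ce cf.
- apply: connect_trans eS (connect1 _); by rewrite kadjE ce cf Ysh1.
- by rewrite (andP eS).1 cf.
- by apply: hitP => //; case/andP: eS.
- apply: connect_trans eS (connect1 _); by rewrite kadjE ce cf -share_endC Ysh1 // share_endC.
- by rewrite cf andbT; apply/existsP; exists j.
- apply: connect_trans eS (connect1 _); by rewrite kadjE ce cf sx.
Qed.

Lemma YA (c : coloring G1) (d : coloring G2) (s : {perm 'I_3}) a b e0 :
  a != b -> d e0 \in [:: a; b] -> compat c d s ->
  exists s', compat c (kempe_switch d a b e0) s' /\
    kempe_equiv (Ycol s1 s2 x c d s) (Ycol s1 s2 x c (kempe_switch d a b e0) s').
Proof.
move=> ab de0 cp.
set hit := [exists k, connect (kadj d a b) e0 (y k)].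
have hitP : forall j, d (y j) \in [:: a; b] -> hit -> connect (kadj d a b) e0 (y j).
  move=> j cj /existsP; case=> k hk; apply: (connect_trans hk); apply: connect1.
  by rewrite kadjE cj (connect_ab hk de0) sy.
set S := [set e : Yedge v1 v2 | match e with
   | inl (inr e2) => if hit then ~~ connect (kadj d a b) e0 (val e2) && (d (val e2) \in [:: a; b])
                     else connect (kadj d a b) e0 (val e2)
   | _ => false end].
exists (if hit then tperm a b * s else s)%g; split.
  move=> j; rewrite ffunE -cp.
  case hj: (connect (kadj d a b) e0 (y j)).
    have hh : hit by apply/existsP; exists j.
    by rewrite hh permM tpermS swapcK.
  case hh: hit => //.
  rewrite permM tpermS swapc_out //; apply: contraFN hj => h; exact: hitP.
have -> : Ycol s1 s2 x c (kempe_switch d a b e0) (if hit then tperm a b * s else s)%g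
        = swapS (Ycol s1 s2 x c d s) (s a) (s b) S.
  apply/ffunP => -[[e1|e2]|j]; rewrite !ffunE inE //=.
  case: ifP => hh /=.
    rewrite permM tpermS; case: ifP => hc /=; first by rewrite swapcK.
    case: ifP => hab; first by rewrite swapc_perm.
    by rewrite swapc_out ?hab.
  by case: ifP => hc //; rewrite swapc_perm.
have sab : s a != s b by rewrite (inj_eq perm_inj).
apply: switch_set => //.
  move=> -[[e1|e2]|j]; rewrite inE ffunE //= perm_in.
  by case: ifP => _ => [/andP[]|h] //; exact: connect_ab h de0.
move=> e f; rewrite inE kadjE !ffunE => eS /and3P[ce cf sh]; rewrite inE.
move: e f eS ce cf sh => [[e1|e2]|j] [[f1|f2]|k] //= eS ce cf sh.
- rewrite perm_in in ce; rewrite perm_in in cf.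
  have kf : kadj d a b (val e2) (val f2) by rewrite kadjE ce cf.
  move: eS; case hh: hit.
    case/andP=> nc _; rewrite cf andbT; apply: contra nc => h.
    by apply: (connect_trans h); apply: connect1; rewrite kadjC.
  by move=> h; apply: (connect_trans h); apply: connect1.
- rewrite -cp perm_in in cf; rewrite perm_in in ce.
  have kf : kadj d a b (val e2) (y k) by rewrite kadjE ce cf Ysh2.
  move: eS; case hh: hit.
    case/andP=> nc _; apply: contraNT nc => _.
    by apply: (connect_trans (hitP _ cf hh)); apply: connect1; rewrite kadjC.
  move=> h; have : hit by apply/existsP; exists k; apply: (connect_trans h); apply: connect1.
  by rewrite hh.
Qed.

Lemma YBeq (c c' : coloring G1) (d : coloring G2) (s : {perm 'I_3}) :
  kempe_equiv c c' -> compat c d s ->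
  exists s', compat c' d s' /\ kempe_equiv (Ycol s1 s2 x c d s) (Ycol s1 s2 x c' d s').
Proof.
move=> h; move: h s; apply: (@kempe_ind _ (fun c c' => forall s, compat c d s ->
  exists s', compat c' d s' /\ kempe_equiv (Ycol s1 s2 x c d s) (Ycol s1 s2 x c' d s'))).
- by move=> c0 s0 h; exists s0; split => //; apply: rt_refl.
- move=> c0 c1 c2 h1 h2 s0 hs0; case: (h1 s0 hs0) => s3 [hs3 e1].
  case: (h2 s3 hs3) => s4 [hs4 e2]; exists s4; split => //; exact: rt_trans e1 e2.
- by move=> c0 a b e0 ab ce s0 hs0; exact: YB.
Qed.

Lemma YAeq (c : coloring G1) (d d' : coloring G2) (s : {perm 'I_3}) :
  kempe_equiv d d' -> compat c d s ->
  exists s', compat c d' s' /\ kempe_equiv (Ycol s1 s2 x c d s) (Ycol s1 s2 x c d' s').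
Proof.
move=> h; move: h s; apply: (@kempe_ind _ (fun d d' => forall s, compat c d s ->
  exists s', compat c d' s' /\ kempe_equiv (Ycol s1 s2 x c d s) (Ycol s1 s2 x c d' s'))).
- by move=> c0 s0 h; exists s0; split => //; apply: rt_refl.
- move=> c0 c1 c2 h1 h2 s0 hs0; case: (h1 s0 hs0) => s3 [hs3 e1].
  case: (h2 s3 hs3) => s4 [hs4 e2]; exists s4; split => //; exact: rt_trans e1 e2.
- by move=> c0 a b e0 ab ce s0 hs0; exact: YA.
Qed.

Lemma compat_uniq (c : coloring G1) (d : coloring G2) (s s' : {perm 'I_3}) :
  proper3 d -> injective y -> compat c d s -> compat c d s' -> s = s'.
Proof.
move=> pd iy h h'.
have inj : injective (fun j => d (y j)).
  move=> j k e; apply/eqP; apply/negPn/negP => jk.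
  have : adjacent (y j) (y k) by rewrite /adjacent sy andbT (inj_eq iy).
  by move/pd; rewrite e eqxx.
apply/permP => k.
have : k \in codom (fun j => d (y j)) by apply: inj_card_onto.
by case/codomP => j ->; rewrite h h'.
Qed.

End YS.

Lemma Ythm (G1 G2 : mgraph) (v1 : vert G1) (v2 : vert G2)
     (x : 'I_3 -> edge G1) (y : 'I_3 -> edge G2)
     (s1 : 'I_3 -> {u : vert G1 | u != v1}) (s2 : 'I_3 -> {u : vert G2 | u != v2})
     (c1 c2 : coloring G1) (d1 d2 : coloring G2) (sigma1 sigma2 : {perm 'I_3}) :
     injective y ->
     (forall j, (src (x j) = v1 /\ tgt (x j) = val (s1 j)) \/
                (tgt (x j) = v1 /\ src (x j) = val (s1 j))) ->
     (forall j, (src (y j) = v2 /\ tgt (y j) = val (s2 j)) \/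
                (tgt (y j) = v2 /\ src (y j) = val (s2 j))) ->
     proper3 d2 ->
     kempe_equiv c1 c2 -> kempe_equiv d1 d2 ->
     (forall j, sigma1 (d1 (y j)) = c1 (x j)) ->
     (forall j, sigma2 (d2 (y j)) = c2 (x j)) ->
     @kempe_equiv (Ycomp s1 s2) (Ycol s1 s2 x c1 d1 sigma1) (Ycol s1 s2 x c2 d2 sigma2).
Proof.
move=> iy hx hy pd ec ed h1 h2.
case: (@YBeq _ _ _ _ x y s1 s2 hx _ _ d1 _ ec h1) => s3 [hs3 e1].
case: (@YAeq _ _ _ _ x y s1 s2 hy _ _ _ _ ed hs3) => s4 [hs4 e2].
have -> : sigma2 = s4 by apply: (compat_uniq hy pd iy h2 hs4).
exact: rt_trans e1 e2.
Qed.


Lemma three (al a b u : 'I_3) : al != a -> al != b -> a != b -> u != al -> u != a -> u = b.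
Proof. by move: al a b u; ord3; ord3; ord3; ord3 => //= *; apply/val_inj. Qed.

Section HS.
Variables (G1 G2 : mgraph) (x : edge G1) (y : edge G2)
  (s11 s12 : vert G1) (s21 s22 : vert G2).
Hypothesis hx : (src x = s11 /\ tgt x = s12) \/ (src x = s12 /\ tgt x = s11).
Hypothesis hy : (src y = s21 /\ tgt y = s22) \/ (src y = s22 /\ tgt y = s21).
Notation HG := (Hcomp x y s11 s12 s21 s22).

Lemma Hsh1 (e1 : {e : edge G1 | e != x}) bb :
  share_end (G:=HG) (inl (inl e1)) (inr bb) -> share_end (val e1) x.
Proof.
have E : forall u w, (inl u == inl w :> Hvert G1 G2) = (u == w) by [].
have F : forall u w, (inl u == inr w :> Hvert G1 G2) = false by [].
rewrite /share_end; case: bb => /=; rewrite ?E ?F /= ?orbF;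
case: hx => -[-> ->] /orP[] /eqP ->; by rewrite eqxx ?orbT.
Qed.

Lemma Hsh2 (e1 : {e : edge G2 | e != y}) bb :
  share_end (G:=HG) (inl (inr e1)) (inr bb) -> share_end (val e1) y.
Proof.
have E : forall u w, (inr u == inr w :> Hvert G1 G2) = (u == w) by [].
have F : forall u w, (inr u == inl w :> Hvert G1 G2) = false by [].
rewrite /share_end; case: bb => /=; rewrite ?E ?F /= ?orbF;
case: hy => -[-> ->] /orP[] /eqP ->; by rewrite eqxx ?orbT.
Qed.

Lemma sxx : share_end x x. Proof. by rewrite /share_end eqxx. Qed.

Definition hcompat (c : coloring G1) (d : coloring G2) (s : {perm 'I_3}) := s (d y) = c x.

Lemma HB (c : coloring G1) (d : coloring G2) (s : {perm 'I_3}) a b e0 :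
  a != b -> c e0 \in [:: a; b] -> hcompat c d s ->
  exists s', hcompat (kempe_switch c a b e0) d s' /\
    kempe_equiv (Hcol x y s11 s12 s21 s22 c d s) (Hcol x y s11 s12 s21 s22 (kempe_switch c a b e0) d s').
Proof.
move=> ab ce0 cp.
set hit := connect (kadj c a b) e0 x.
set S := [set e : Hedge x y | match e with
   | inl (inl e1) => connect (kadj c a b) e0 (val e1)
   | inr _ => hit
   | inl (inr e2) => hit && (s (d (val e2)) \in [:: a; b]) end].
exists (if hit then s * tperm a b else s)%g; split.
  rewrite /hcompat ffunE -/hit; case hh: hit; last by [].
  by rewrite permM tpermS cp.
have -> : Hcol x y s11 s12 s21 s22 (kempe_switch c a b e0) d (if hit then s * tperm a b else s)%g
        = swapS (Hcol x y s11 s12 s21 s22 c d s) a b S.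
  apply/ffunP => -[[e1|e2]|j]; rewrite !ffunE inE //=.
  case: ifP => hh /=; last by [].
  by rewrite permM tpermS; case: ifP => // h; rewrite swapc_out ?h.
apply: switch_set => //.
  move=> -[[e1|e2]|j]; rewrite inE ffunE /=.
  - by move=> h; exact: connect_ab h ce0.
  - by case/andP.
  - by move=> h; exact: connect_ab h ce0.
move=> e f; rewrite inE kadjE !ffunE => eS /and3P[ce cf sh]; rewrite inE.
move: e f eS ce cf sh => [[e1|e2]|j] [[f1|f2]|k] //= eS ce cf sh.
- apply: connect_trans eS (connect1 _); by rewrite kadjE ce cf.
- apply: connect_trans eS (connect1 _); by rewrite kadjE ce cf (Hsh1 sh).
- by rewrite (andP eS).1 cf.
- by case/andP: eS.
- apply: connect_trans eS (connect1 _); rewrite kadjE ce cf share_endC.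
  by apply: (@Hsh1 f1 j); rewrite share_endC.
- by rewrite cf andbT.
Qed.

Lemma HA (c : coloring G1) (d : coloring G2) (s : {perm 'I_3}) a b e0 :
  a != b -> d e0 \in [:: a; b] -> hcompat c d s ->
  exists s', hcompat c (kempe_switch d a b e0) s' /\
    kempe_equiv (Hcol x y s11 s12 s21 s22 c d s) (Hcol x y s11 s12 s21 s22 c (kempe_switch d a b e0) s').
Proof.
move=> ab de0 cp.
set hit := connect (kadj d a b) e0 y.
set S := [set e : Hedge x y | match e with
   | inl (inr e2) => if hit then ~~ connect (kadj d a b) e0 (val e2) && (d (val e2) \in [:: a; b])
                     else connect (kadj d a b) e0 (val e2)
   | _ => false end].
exists (if hit then tperm a b * s else s)%g; split.
  rewrite /hcompat ffunE -cp -/hit; case hh: hit => //.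
  by rewrite permM tpermS swapcK.
have -> : Hcol x y s11 s12 s21 s22 c (kempe_switch d a b e0) (if hit then tperm a b * s else s)%g
        = swapS (Hcol x y s11 s12 s21 s22 c d s) (s a) (s b) S.
  apply/ffunP => -[[e1|e2]|j]; rewrite !ffunE inE //=.
  case: ifP => hh /=.
    rewrite permM tpermS; case: ifP => hc /=; first by rewrite swapcK.
    case: ifP => hab; first by rewrite swapc_perm.
    by rewrite swapc_out ?hab.
  by case: ifP => hc //; rewrite swapc_perm.
have sab : s a != s b by rewrite (inj_eq perm_inj).
apply: switch_set => //.
  move=> -[[e1|e2]|j]; rewrite inE ffunE //= perm_in.
  by case: ifP => _ => [/andP[]|h] //; exact: connect_ab h de0.
move=> e f; rewrite inE kadjE !ffunE => eS /and3P[ce cf sh]; rewrite inE.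
move: e f eS ce cf sh => [[e1|e2]|j] [[f1|f2]|k] //= eS ce cf sh.
- rewrite perm_in in ce; rewrite perm_in in cf.
  have kf : kadj d a b (val e2) (val f2) by rewrite kadjE ce cf.
  move: eS; case hh: hit.
    case/andP=> nc _; rewrite cf andbT; apply: contra nc => h.
    by apply: (connect_trans h); apply: connect1; rewrite kadjC.
  by move=> h; apply: (connect_trans h); apply: connect1.
- rewrite -cp perm_in in cf; rewrite perm_in in ce.
  have kf : kadj d a b (val e2) y by rewrite kadjE ce cf (Hsh2 sh).
  move: eS; case hh: hit.
    case/andP=> nc _; apply: contraNT nc => _.
    by apply: (connect_trans hh); apply: connect1; rewrite kadjC.
  move=> h; have : hit by apply: (connect_trans h); apply: connect1.
  by rewrite hh.
Qed.

Lemma Hperm (c : coloring G1) (d : coloring G2) (s s' : {perm 'I_3}) :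
  hcompat c d s -> hcompat c d s' ->
  kempe_equiv (Hcol x y s11 s12 s21 s22 c d s) (Hcol x y s11 s12 s21 s22 c d s').
Proof.
move=> h h'.
case: (pickP (fun k => s k != s' k)) => [k1 hk1|none]; last first.
  have -> : s' = s by apply/permP => k; have := none k; move/negbFE/eqP.
  exact: rt_refl.
set a := s k1; set b := s' k1.
have k10 : k1 != d y by apply: contraNneq hk1 => ->; rewrite h h'.
have aa : c x != a by rewrite -h (inj_eq perm_inj) eq_sym.
have ab' : c x != b by rewrite -h' (inj_eq perm_inj) eq_sym.
have sw : forall k, s' k = swapc a b (s k).
  move=> k; case: (eqVneq k (d y)) => [->|k0].
    by rewrite h h' swapc_out // !inE negb_or aa ab'.
  case: (eqVneq k k1) => [->|kk1].
    by rewrite /swapc eqxx.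
  have u1 : s k = b.
    apply: three aa ab' hk1 _ _; first by rewrite -h (inj_eq perm_inj).
    by rewrite (inj_eq perm_inj).
  have u2 : s' k = a.
    apply: three ab' aa _ _ _; first by rewrite eq_sym.
      by rewrite -h' (inj_eq perm_inj).
    by rewrite (inj_eq perm_inj).
  by rewrite u1 u2 /swapc eqxx; case: eqP => // /eqP; rewrite eq_sym (negbTE hk1).
set S := [set e : Hedge x y | match e with
   | inl (inr e2) => s (d (val e2)) \in [:: a; b]
   | _ => false end].
have -> : Hcol x y s11 s12 s21 s22 c d s' = swapS (Hcol x y s11 s12 s21 s22 c d s) a b S.
  apply/ffunP => -[[e1|e2]|j]; rewrite !ffunE inE //= sw.
  by case: ifP => // hh; rewrite swapc_out ?hh.
apply: switch_set => //.
  by move=> -[[e1|e2]|j]; rewrite inE ffunE.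
move=> e f; rewrite inE kadjE !ffunE => eS /and3P[ce cf sh]; rewrite inE.
move: e f eS ce cf sh => [[e1|e2]|j] [[f1|f2]|k] //= eS ce cf sh.
by move: cf; rewrite !inE (negbTE aa) (negbTE ab').
Qed.

Lemma HBeq (c c' : coloring G1) (d : coloring G2) (s : {perm 'I_3}) :
  kempe_equiv c c' -> hcompat c d s ->
  exists s', hcompat c' d s' /\ kempe_equiv (Hcol x y s11 s12 s21 s22 c d s) (Hcol x y s11 s12 s21 s22 c' d s').
Proof.
move=> h; move: h s; apply: (@kempe_ind _ (fun c c' => forall s, hcompat c d s ->
  exists s', hcompat c' d s' /\ kempe_equiv (Hcol x y s11 s12 s21 s22 c d s) (Hcol x y s11 s12 s21 s22 c' d s'))).
- by move=> c0 s0 h; exists s0; split => //; apply: rt_refl.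
- move=> c0 c1 c2 h1 h2 s0 hs0; case: (h1 s0 hs0) => s3 [hs3 e1].
  case: (h2 s3 hs3) => s4 [hs4 e2]; exists s4; split => //; exact: rt_trans e1 e2.
- by move=> c0 a b e0 ab ce s0 hs0; exact: HB.
Qed.

Lemma HAeq (c : coloring G1) (d d' : coloring G2) (s : {perm 'I_3}) :
  kempe_equiv d d' -> hcompat c d s ->
  exists s', hcompat c d' s' /\ kempe_equiv (Hcol x y s11 s12 s21 s22 c d s) (Hcol x y s11 s12 s21 s22 c d' s').
Proof.
move=> h; move: h s; apply: (@kempe_ind _ (fun d d' => forall s, hcompat c d s ->
  exists s', hcompat c d' s' /\ kempe_equiv (Hcol x y s11 s12 s21 s22 c d s) (Hcol x y s11 s12 s21 s22 c d' s'))).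
- by move=> c0 s0 h; exists s0; split => //; apply: rt_refl.
- move=> c0 c1 c2 h1 h2 s0 hs0; case: (h1 s0 hs0) => s3 [hs3 e1].
  case: (h2 s3 hs3) => s4 [hs4 e2]; exists s4; split => //; exact: rt_trans e1 e2.
- by move=> c0 a b e0 ab ce s0 hs0; exact: HA.
Qed.

Lemma Hthm (c1 c2 : coloring G1) (d1 d2 : coloring G2) (tau1 tau2 : {perm 'I_3}) :
  kempe_equiv c1 c2 -> kempe_equiv d1 d2 ->
  tau1 (d1 y) = c1 x -> tau2 (d2 y) = c2 x ->
  kempe_equiv (Hcol x y s11 s12 s21 s22 c1 d1 tau1) (Hcol x y s11 s12 s21 s22 c2 d2 tau2).
Proof.
move=> ec ed h1 h2.
case: (@HBeq _ _ d1 _ ec h1) => s3 [hs3 e1].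
case: (HAeq ed hs3) => s4 [hs4 e2].
apply: rt_trans e1 (rt_trans _ _ _ _ _ e2 _); exact: Hperm.
Qed.

End HS.

Theorem lemma10 :
  (forall (G1 G2 : mgraph) (v1 : vert G1) (v2 : vert G2)
     (x : 'I_3 -> edge G1) (y : 'I_3 -> edge G2)
     (s1 : 'I_3 -> {u : vert G1 | u != v1}) (s2 : 'I_3 -> {u : vert G2 | u != v2})
     (c1 c2 : coloring G1) (d1 d2 : coloring G2) (sigma1 sigma2 : {perm 'I_3}),
     loopless G1 -> loopless G2 -> cubic G1 -> cubic G2 ->
     injective x -> injective y ->
     (forall j, (src (x j) = v1 /\ tgt (x j) = val (s1 j)) \/
                (tgt (x j) = v1 /\ src (x j) = val (s1 j))) ->
     (forall j, (src (y j) = v2 /\ tgt (y j) = val (s2 j)) \/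
                (tgt (y j) = v2 /\ src (y j) = val (s2 j))) ->
     proper3 c1 -> proper3 c2 -> proper3 d1 -> proper3 d2 ->
     kempe_equiv c1 c2 -> kempe_equiv d1 d2 ->
     (forall j, sigma1 (d1 (y j)) = c1 (x j)) ->
     (forall j, sigma2 (d2 (y j)) = c2 (x j)) ->
     @kempe_equiv (Ycomp s1 s2) (Ycol s1 s2 x c1 d1 sigma1) (Ycol s1 s2 x c2 d2 sigma2))
  /\
  (forall (G1 G2 : mgraph) (x : edge G1) (y : edge G2)
     (s11 s12 : vert G1) (s21 s22 : vert G2)
     (c1 c2 : coloring G1) (d1 d2 : coloring G2) (tau1 tau2 : {perm 'I_3}),
     loopless G1 -> loopless G2 -> cubic G1 -> cubic G2 ->
     (src x = s11 /\ tgt x = s12) \/ (src x = s12 /\ tgt x = s11) ->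
     (src y = s21 /\ tgt y = s22) \/ (src y = s22 /\ tgt y = s21) ->
     proper3 c1 -> proper3 c2 -> proper3 d1 -> proper3 d2 ->
     kempe_equiv c1 c2 -> kempe_equiv d1 d2 ->
     tau1 (d1 y) = c1 x -> tau2 (d2 y) = c2 x ->
     @kempe_equiv (Hcomp x y s11 s12 s21 s22)
       (Hcol x y s11 s12 s21 s22 c1 d1 tau1) (Hcol x y s11 s12 s21 s22 c2 d2 tau2)).

Proof.
split.
- move=> G1 G2 v1 v2 x y s1 s2 c1 c2 d1 d2 sigma1 sigma2 _ _ _ _ _ iy hx hy _ _ _ pd ec ed h1 h2.
  exact: Ythm iy hx hy pd ec ed h1 h2.
- move=> G1 G2 x y s11 s12 s21 s22 c1 c2 d1 d2 tau1 tau2 _ _ _ _ hx hy _ _ _ _ ec ed h1 h2.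
  exact: (Hthm hx hy ec ed h1 h2).
Qed.
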